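(* Let $n\ge1$, let $p_0$ be the origin of $\mathbb{Z}^n$ and let $p=(p_1,\dots,p_n)\in\mathbb{Z}^n$ with all $p_j\ge 0$. Then there exists at least one linear path from $p_0$ to $p$, i.e. a monotone discrete path $H=(h_0=p_0,h_1,\dots,h_N=p)$ with $N=p_1+\dots+p_n$ such that for every point $h\in H$, the voxel centered at $h$ intersects the line segment $\overline{p_0p}$.
   Context: A monotone discrete path from $p_0$ to $p$ is a sequence of points of $\mathbb{Z}^n$ starting at $p_0$ and ending at $p$ in which each successive point is obtained from the previous one by increasing exactly one coordinate by $1$. The voxel centered at a grid point $h=(h_1,\dots,h_n)\in\mathbb{Z}^n$ is the closed axis-parallel unit hypercube $\prod_{j=1}^n[h_j-\tfrac12,h_j+\tfrac12]$. A monotone discrete path from $p_0$ to $p$ is called linear if the voxel centered at each of its points intersects the segment $\overline{p_0p}$. *)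

(* Defs.v *)
From HB Require Import structures.
From mathcomp Require Import all_boot all_order all_algebra.
Set Implicit Arguments. Unset Strict Implicit. Unset Printing Implicit Defensive.
Import Order.TTheory GRing.Theory Num.Theory.
Local Open Scope ring_scope.

Definition point (n : nat) := {ffun 'I_n -> int}.

Definition origin (n : nat) : point n := [ffun _ => 0].

Definition unit_step (n : nat) (a b : point n) : bool :=
  [exists i : 'I_n, (b i == a i + 1) && [forall j : 'I_n, (j != i) ==> (b j == a j)]].

Definition monotone_path (n : nat) (p0 p : point n) (s : seq (point n)) : bool :=
  path (@unit_step n) p0 s && (last p0 s == p).

Definition voxel_meets_segment (R : realFieldType) (n : nat) (p0 p h : point n) : Prop :=
  exists t : R, 0 <= t /\ t <= 1 /\
    forall j : 'I_n,
      `|(p0 j)%:~R + t * (p j - p0 j)%:~R - (h j)%:~R| <= 1 / 2%:R.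

Definition linear_path (R : realFieldType) (n : nat) (p0 p : point n)
    (s : seq (point n)) : Prop :=
  monotone_path p0 p s /\
  forall h, h \in p0 :: s -> voxel_meets_segment R p0 p h.

(* Main.v *)
Require Import Defs.
From HB Require Import structures.
From mathcomp Require Import all_boot all_order all_algebra.
From mathcomp Require Import zify lra.
Import Order.TTheory GRing.Theory Num.Theory.
Local Open Scope ring_scope.
Set Implicit Arguments. Unset Strict Implicit.

Definition inv (R : realFieldType) n (p h : point n) : Prop :=
  exists t : R, 0 <= t /\ t <= 1 /\
    forall j : 'I_n, `|t * (p j)%:~R - (h j)%:~R| <= 1 / 2%:R.

Definition incr n (h : point n) (j : 'I_n) : point n :=
  [ffun k => if k == j then h k + 1 else h k].

Lemma next (R : realFieldType) n (p h : point n)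
  (hb : forall j, 0 <= h j <= p j) j0 (hj0 : h j0 < p j0) :
  inv R p h -> exists j, h j < p j /\ inv R p (incr h j).
Proof.
case=> t [t0 [t1 Ht]].
pose F := fun k => (((h k)%:~R + 1 / 2%:R) / (p k)%:~R : R).
case: (arg_minP (P := fun k => h k < p k) F hj0) => j Pj Hmin.
exists j; split => //.
have hjp : h j + 1 <= p j by clear -Pj; lia.
have hj0' : 0 <= h j by have := hb j; clear; lia.
move: hjp hj0'; rewrite -(ler_int R) -(ler_int R 0) intrD => hjp hj0'.
have pjR : 0 < ((p j)%:~R : R) by lra.
have FjE : F j * (p j)%:~R = (h j)%:~R + 1 / 2%:R.
  by rewrite /F divfK // lt0r_neq0.
have tF : t <= F j.
  have := Ht j; rewrite ler_norml => /andP [_ H2].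
  rewrite /F ler_pdivlMr //; lra.
have F0 : 0 <= F j by rewrite /F divr_ge0 //; lra.
have F1 : F j <= 1 by rewrite /F ler_pdivrMr //; lra.
exists (F j); split => //; split => // k.
rewrite ffunE; case: eqP => [->|/eqP nkj].
  rewrite intrD FjE ler_norml; apply/andP; split; lra.
have [hk0 hkp] : 0 <= h k /\ h k <= p k by apply/andP; exact: hb.
have [pkpos|pk0] := ltP 0 (p k); last first.
  have [-> ->] : h k = 0 /\ p k = 0 by clear -hk0 hkp pk0; lia.
  by rewrite mulr0 subr0 normr0; lra.
have Htk := Ht k; rewrite ler_norml in Htk; case/andP: Htk => Hl Hu.
have pkR : 0 < ((p k)%:~R : R) by rewrite (ltr_int R 0).
have low : t * (p k)%:~R <= F j * (p k)%:~R by rewrite ler_wpM2r // ltW.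
have up : F j * (p k)%:~R <= (h k)%:~R + 1 / 2%:R.
  have [hlt|heq] : h k < p k \/ h k = p k by clear -hkp; lia.
    have H : F j <= F k := Hmin k hlt.
    by rewrite -ler_pdivlMr.
  have : F j * (p k)%:~R <= 1 * (p k)%:~R by rewrite ler_wpM2r // ltW.
  rewrite heq; lra.
rewrite ler_norml; apply/andP; split; lra.
Qed.

Lemma main (R : realFieldType) n (p : point n) m : forall h : point n,
  (forall j, 0 <= h j <= p j) -> \sum_j (p j - h j) = m%:Z -> inv R p h ->
  exists s, (path (@unit_step n) h s && (last h s == p)) /\
    (forall x, x \in h :: s -> inv R p x) /\ size s = m.
Proof.
elim: m => [|m IH] h hb hs hI.
  have z : forall j, p j - h j = 0.
    move=> j; apply: (psumr_eq0P (P := predT) _ hs) => // i _.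
    by have := hb i; clear; lia.
  have E : h = p.
    by apply/ffunP => j; apply/esym/eqP; rewrite -subr_eq0 z.
  subst h; exists [::]; split; first by rewrite /= eqxx.
  by split => // x; rewrite inE => /eqP ->.
case: (pickP (fun j => h j < p j)) => [j0 hj0 | none]; last first.
  have : \sum_j (p j - h j) = 0.
    apply: big1 => j _; move/negbT: (none j); rewrite -leNgt => H.
    by have := hb j; clear -H; lia.
  by rewrite hs.
have [j [hjp hI']] := next hb hj0 hI.
have hb' : forall k, 0 <= incr h j k <= p k.
  move=> k; rewrite ffunE; case: eqP => [->|_]; last exact: hb.
  by have := hb j; clear -hjp; lia.
have hs' : \sum_k (p k - incr h j k) = m%:Z.
  have E : \sum_k (p k - h k) = \sum_k (p k - incr h j k) + 1.
    rewrite (bigD1 j) //= [in RHS](bigD1 j) //= ffunE eqxx.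
    have -> : \sum_(k < n | k != j) (p k - incr h j k) =
              \sum_(k < n | k != j) (p k - h k).
      by apply: eq_bigr => k /negbTE nkj; rewrite ffunE nkj.
    set S := \sum_(k < n | k != j) (p k - h k).
    rewrite opprD !addrA; set a := p j - h j.
    by rewrite -!addrA (addrC S) !addrA subrK.
  by move: E; rewrite hs; clear; lia.
have [s [Hp [Hin Hsz]]] := IH _ hb' hs' hI'.
exists (incr h j :: s); split.
  rewrite /= -andbA; apply/andP; split => //.
  apply/existsP; exists j; apply/andP; split; first by rewrite ffunE eqxx.
  apply/forallP => k; apply/implyP => nkj; by rewrite ffunE (negbTE nkj).
split; last by rewrite /= Hsz.
move=> x; rewrite inE => /orP [/eqP -> // | H]; exact: Hin.
Qed.

Theorem fact1 (R : realFieldType) (n : nat) (hn : (1 <= n)%N) (p : point n)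
    (hp : forall j : 'I_n, 0 <= p j) :
  exists s : seq (point n),
    linear_path R (origin n) p s /\ (size s)%:Z = \sum_(j < n) p j.
Proof.
have [m Hm] : exists m : nat, \sum_(j < n) p j = m%:Z.
  have : 0 <= \sum_(j < n) p j by apply: sumr_ge0 => j _.
  by case: (\sum_(j < n) p j) => [m|m] //; exists m.
have hb : forall j, 0 <= origin n j <= p j by move=> j; rewrite ffunE hp.
have hs : \sum_j (p j - origin n j) = m%:Z.
  by rewrite -Hm; apply: eq_bigr => j _; rewrite ffunE subr0.
have hI : inv R p (origin n).
  exists 0; split => //; split => // j; rewrite ffunE mul0r subr0 normr0; lra.
have [s [Hp [Hin Hsz]]] := main hb hs hI.
exists s; split; last by rewrite Hm Hsz.
split => // h /Hin [t [t0 [t1 Ht]]].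
exists t; split => //; split => // j.
by rewrite !ffunE subr0 add0r.
Qed.
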